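(* Consider the strategic usage dynamics described in the context, satisfying assumptions (A1)–(A4), with memory parameter $p\ge0$. For every time $t\ge 0$ and every user–service pair $(i,j)$ with $M^t_{ij}>0$, we have $\ell(h^{t+1}_j,x_i,y_i)=0$. Consequently, when $p>0$, if $A^t_{ij}>0$ for some time $t$, then $\ell(h^\tau_j,x_i,y_i)=0$ for all times $\tau>t$.
   Context: Setting. There are $n\ge 1$ users and $m\ge 1$ services. User $i\in\{1,\dots,n\}$ has fixed features $x_i\in\mathcal X$ and a fixed label $y_i\in\{+1,-1\}$. $\mathcal H$ is a set of classifiers $h:\mathcal X\to\{+1,-1\}$. There is a utility $u:\mathcal X\times\mathcal H\to\mathbb R$ (written $u(x,h)$) and a loss $\ell:\mathcal H\times\mathcal X\times\{+1,-1\}\to\mathbb R$ satisfying: (A1) for any $h_1,h_2\in\mathcal H$ and $x\in\mathcal X$ with $h_1(x)=-1$ and $h_2(x)=+1$, we have $u(x,h_1)\le 0<u(x,h_2)$; (A2) for all $h\in\mathcal H$ the loss is non-negative, $-y\,\ell(h,x,y)$ is strictly monotonically increasing with $u(x,h)$, and there exists $v>0$ such that $u(x,h)=0$ implies $\ell(h,x,y)=v$; (A3) (realizability) there is $h\in\mathcal H$ with $\ell(h,x_i,y_i)=0$ for all $i=1,\dots,n$. Dynamics. Fix $q>1$ and a memory parameter $p\ge 0$. A state at time $t$ is $(H^t,A^t)$ with $H^t=(h^t_1,\dots,h^t_m)\in\mathcal H^m$ and usage matrix $A^t\in\mathbb R_+^{n\times m}$. Given classifiers $H$, a user best response is any $A\in\arg\max_{A\in\mathbb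 R_+^{n\times m}}\sum_{i=1}^n\big[\sum_{j=1}^m A_{ij}u(x_i,h_j)-\frac1q(\sum_{j=1}^m A_{ij})^q\big]$ (any tie-breaking). Memory: $M^{-1}=0$ and $M^t=\frac{A^t}{1+p}+\frac{pM^{t-1}}{1+p}$ for $t\ge0$. For a memory matrix $M^t$ define $L^t(H)=\sum_{j=1}^m\sum_{i=1}^n\frac{M^t_{ij}}{\sum_{k=1}^n M^t_{kj}}\ell(h_j,x_i,y_i)$, with the fraction taken to be $0$ when $\sum_k M^t_{kj}=0$. The service update is sticky: $H^{t+1}\in\arg\min_{H\in\mathcal H^m}L^t(H)$, and whenever $L^{t-1}(H^t)=L^t(H^t)$ we have $H^{t+1}=H^t$. (A4) $H^0\in\mathcal H^m$ is arbitrary; for every $t\ge0$, $A^t$ is a user best response to $H^t$, and $H^{t+1}$ is obtained from $M^t$ by the sticky service update. *)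

(* Defs.v *)
From HB Require Import structures.
From mathcomp Require Import all_boot all_order all_algebra.
From mathcomp Require Import all_classical all_reals all_analysis.
Set Implicit Arguments. Unset Strict Implicit. Unset Printing Implicit Defensive.
Import Order.TTheory GRing.Theory Num.Theory.
Local Open Scope ring_scope.

Section Defs.
Variables (R : realType) (X Hc : Type).

(* labels: true = +1, false = -1 *)
Definition sgnl (b : bool) : R := if b then 1 else -1.

Definition A1 (cl : Hc -> X -> bool) (u : X -> Hc -> R) : Prop :=
  forall (h1 h2 : Hc) (x : X), cl h1 x = false -> cl h2 x = true ->
    u x h1 <= 0 /\ 0 < u x h2.

Definition A2 (u : X -> Hc -> R) (loss : Hc -> X -> bool -> R) : Prop :=
  (forall h x y, 0 <= loss h x y) /\
  (exists phi : X -> bool -> R -> R,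
      (forall x y a b, a < b -> phi x y a < phi x y b) /\
      (forall h x y, - sgnl y * loss h x y = phi x y (u x h))) /\
  (exists v : R, 0 < v /\ forall h x y, u x h = 0 -> loss h x y = v).

Definition A3 (n : nat) (xs : 'I_n -> X) (ys : 'I_n -> bool)
  (loss : Hc -> X -> bool -> R) : Prop :=
  exists h : Hc, forall i, loss h (xs i) (ys i) = 0.

Definition user_obj (n m : nat) (q : R) (u : X -> Hc -> R) (xs : 'I_n -> X)
  (H : 'I_m -> Hc) (A : 'I_n -> 'I_m -> R) : R :=
  \sum_(i < n) (\sum_(j < m) A i j * u (xs i) (H j)
                 - (\sum_(j < m) A i j) `^ q / q).

Definition best_response (n m : nat) (q : R) (u : X -> Hc -> R)
  (xs : 'I_n -> X) (H : 'I_m -> Hc) (A : 'I_n -> 'I_m -> R) : Prop :=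
  (forall i j, 0 <= A i j) /\
  forall A' : 'I_n -> 'I_m -> R, (forall i j, 0 <= A' i j) ->
    user_obj q u xs H A' <= user_obj q u xs H A.

(* Mprev p A t = M^{t-1};  Mprev p A 0 = M^{-1} = 0,
   Mprev p A (t+1) = M^t = A^t/(1+p) + p M^{t-1}/(1+p). *)
Fixpoint Mprev (n m : nat) (p : R) (A : nat -> 'I_n -> 'I_m -> R) (t : nat)
  : 'I_n -> 'I_m -> R :=
  match t with
  | 0 => fun _ _ => 0
  | t'.+1 => fun i j => A t' i j / (1 + p) + p * Mprev p A t' i j / (1 + p)
  end.

Definition Lserv (n m : nat) (loss : Hc -> X -> bool -> R) (xs : 'I_n -> X)
  (ys : 'I_n -> bool) (M : 'I_n -> 'I_m -> R) (H : 'I_m -> Hc) : R :=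
  \sum_(j < m) \sum_(i < n)
    (if \sum_(k < n) M k j == 0 then 0 else M i j / \sum_(k < n) M k j)
      * loss (H j) (xs i) (ys i).

End Defs.

(* Main.v *)
Require Import Defs.
From HB Require Import structures.
From mathcomp Require Import all_boot all_order all_algebra.
From mathcomp Require Import all_classical all_reals all_analysis.
Import Order.TTheory GRing.Theory Num.Theory.
Local Open Scope ring_scope.

Lemma Mprev_ge0 (R : realType) n m (p : R) (A : nat -> 'I_n -> 'I_m -> R) :
  0 <= p -> (forall t i j, 0 <= A t i j) -> forall t i j, 0 <= Mprev p A t i j.
Proof.
move=> hp hA; elim=> [|t IH] i j /=; first by [].
have h1p : 0 < 1 + p by rewrite ltr_pwDl.
by rewrite addr_ge0 // divr_ge0 ?mulr_ge0 ?hA ?IH // ltW.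
Qed.

Theorem lemma1 (R : realType) (X Hc : Type) (cl : Hc -> X -> bool)
  (n m : nat) (xs : 'I_n -> X) (ys : 'I_n -> bool)
  (u : X -> Hc -> R) (loss : Hc -> X -> bool -> R) (q p : R)
  (Hs : nat -> 'I_m -> Hc) (A : nat -> 'I_n -> 'I_m -> R) :
  (0 < n)%N -> (0 < m)%N -> 1 < q -> 0 <= p ->
  A1 cl u -> A2 u loss -> A3 xs ys loss ->
  (* (A4) *)
  (forall t, best_response q u xs (Hs t) (A t)) ->
  (forall t (H : 'I_m -> Hc),
     Lserv loss xs ys (Mprev p A t.+1) (Hs t.+1)
       <= Lserv loss xs ys (Mprev p A t.+1) H) ->
  (forall t, Lserv loss xs ys (Mprev p A t) (Hs t)
             = Lserv loss xs ys (Mprev p A t.+1) (Hs t) ->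
             forall j, Hs t.+1 j = Hs t j) ->
  (forall t i j, 0 < Mprev p A t.+1 i j -> loss (Hs t.+1 j) (xs i) (ys i) = 0) /\
  (0 < p -> forall t i j, 0 < A t i j ->
     forall tau, (t < tau)%N -> loss (Hs tau j) (xs i) (ys i) = 0).
Proof.
move=> _ _ _ hp _ [hl _] [h0 Hh0] hbr hmin _.
have hA : forall t i j, 0 <= A t i j by move=> t i j; case: (hbr t).
have hM := @Mprev_ge0 R n m p A hp hA.
have h1p : 0 < 1 + p by rewrite ltr_pwDl.
have P1 : forall t i j, 0 < Mprev p A t.+1 i j -> loss (Hs t.+1 j) (xs i) (ys i) = 0.
  move=> t i j hpos.
  set M := Mprev p A t.+1.
  have hterm : forall j0 i0, 0 <= (if \sum_(k < n) M k j0 == 0 then 0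
        else M i0 j0 / \sum_(k < n) M k j0) * loss (Hs t.+1 j0) (xs i0) (ys i0).
    move=> j0 i0; apply: mulr_ge0 => //.
    case: ifP => // _; apply: divr_ge0; first exact: hM.
    by apply: sumr_ge0 => k _; exact: hM.
  have hz : Lserv loss xs ys M (Hs t.+1) = 0.
    apply/eqP; rewrite eq_le; apply/andP; split.
      apply: le_trans (hmin t (fun _ => h0)) _.
      rewrite /Lserv big1 // => j0 _; rewrite big1 // => i0 _.
      by rewrite Hh0 mulr0.
    by apply: sumr_ge0 => j0 _; apply: sumr_ge0 => i0 _; exact: hterm.
  move: hz; rewrite /Lserv => /psumr_eq0P hz.
  have := hz (fun j0 _ => sumr_ge0 _ (fun i0 _ => hterm j0 i0)) j isT.
  move=> /psumr_eq0P hj.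
  have := hj (fun i0 _ => hterm j i0) i isT.
  have hS : 0 < \sum_(k < n) M k j.
    rewrite (bigD1 i) //= ltr_pwDl //.
    by apply: sumr_ge0 => k _; exact: hM.
  rewrite (negbTE (lt0r_neq0 hS)) => /eqP; rewrite mulf_eq0 => /orP [|/eqP //].
  by rewrite mulf_eq0 invr_eq0 (negbTE (lt0r_neq0 hS)) (negbTE (lt0r_neq0 hpos)).
split=> // pp t i j hAt tau ltt.
have key : forall s, (t <= s)%N -> 0 < Mprev p A s.+1 i j.
  elim=> [|s IH] hs.
    move: hs; rewrite leqn0 => /eqP ht; rewrite ht in hAt => /=.
    apply: ltr_wpDr; first by rewrite divr_ge0 ?mulr_ge0 ?hM // ltW.
    by rewrite divr_gt0.
  rewrite leq_eqVlt in hs; case/orP: hs => [/eqP <-|hs] /=.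
    apply: ltr_wpDr; first by rewrite divr_ge0 ?mulr_ge0 ?hM // ltW.
    by rewrite divr_gt0.
  apply: ltr_wpDl; first by rewrite divr_ge0 ?hA // ltW.
  by rewrite divr_gt0 // mulr_gt0 // IH.
case: tau ltt => [//|s] ltt.
by apply: P1; apply: key.
Qed.
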